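(* Let $x,y$ be stable g-matchings with $x\prec_F y$. Then there exists a rotation $R\in\mathcal R(x)$ such that $x':=x+\chi^R$ satisfies $x'\preceq_F y$.
   Context: Let $G=(V,E)$ be a finite bipartite graph with color classes $W$ and $F$; the edge joining $w\in W$ and $f\in F$ is written $wf$. Let $b\in\mathbb Z_+^E$ be capacities. For $v\in V$, $E_v$ is the set of edges at $v$, $\mathcal B_v=\{z\in\mathbb Z_+^{E_v}: z\le b|_{E_v}\}$, $\mathbf 1^e$ the unit vector of $e$, $|z|=\sum_e|z(e)|$, $\wedge,\vee$ componentwise min/max. Each $v$ has a choice function $C_v:\mathcal B_v\to\mathcal B_v$ with $C_v(z)\le z$ and, for all $z,z'$: (A1) $z\ge z'\ge C_v(z)\Rightarrow C_v(z')=C_v(z)$; (A2) $z\ge z'\Rightarrow C_v(z)\wedge z'\le C_v(z')$; (A3) $z\ge z'\Rightarrow|C_v(z)|\ge|C_v(z')|$. $z$ is acceptable if $C_v(z)=z$; for distinct acceptable $z,z'$, $z'\prec_v z$ iff $C_v(z\vee z')=z$. $x_v$ = restriction of $x$ to $E_v$. A g-matching is $x\in\mathbb Z_+^E$, $x\le b$, each $x_v$ acceptable; $x\prec_F y$ (distinct) iff $x_f\preceq_f y_f$ for all $f\in F$. $e\in E_v$ is interesting for $v$ under acceptable $z$ if some $z'\in\mathcal B_v$ has $z'(e)>z(e)$, $z'(e')=z(e')$ for $e'\neq e$, $C_v(z')(e)>z(e)$; $e=wf$ blocks a g-matching $x$ if it is interesting for $w$ under $x_w$ and for $f$ under $x_f$;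 a g-matching is stable if no edge blocks it. Rotations: for stable $x$, $U_F^+(x)$ = edges $wf$ interesting for $f$ under $x_f$; $U_F^-(x)$ = edges $wf$ with $x(wf)>0$ not interesting for $f$. Legal $f$-pair: $(a,c)$, $a\in U_F^+(x)\cap E_f$, $c\in E_f\setminus\{a\}$, $C_f(x_f+\mathbf 1^a)=x_f+\mathbf 1^a-\mathbf 1^c$. Legal $w$-pair: $(c,a)$, $c\in U_F^-(x)\cap E_w$, $a\in U_F^+(x)\cap E_w$, $x_w+\mathbf 1^a-\mathbf 1^c$ acceptable; essential if no $d\in (U_F^+(x)\cap E_w)\setminus\{a\}$ is interesting for $w$ under $x_w+\mathbf 1^a-\mathbf 1^c$. Digraph $\mathcal D$: vertices $w^e,f^e$ for $e=wf\in U_F^+(x)\cup U_F^-(x)$, arcs $(w^a,f^a)$ for $a\in U_F^+(x)$, $(f^c,w^c)$ for $c\in U_F^-(x)$, $(f^a,f^c)$ for legal $f$-pairs $(a,c)$, $(w^c,w^a)$ for essential $w$-pairs $(c,a)$. Repeatedly delete vertices with no entering arc; each remaining directed cycle gives a cyclic sequence $(a_1,c_1,\dots,a_k,c_k)$ of distinct edges of $G$, a rotation $R\in\mathcal R(x)$ applicable to $x$, with $\chi^R$ equal to $1$ on $\{a_i\}$, $-1$ on $\{c_i\}$, $0$ elsewhere. *)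

(* Defs.v *)
From mathcomp Require Import all_boot.
Set Implicit Arguments. Unset Strict Implicit. Unset Printing Implicit Defensive.

(* Vectors in Z_+^{E_v} are represented as vectors
   in Z_+^E vanishing outside E_v (see inB).  C v is the choice function of v;
   only its behaviour on B_v matters. *)

Section GMatch.
Variables (W F E : finType) (ew : E -> W) (ef : E -> F) (b : E -> nat).
Variable C : W + F -> {ffun E -> nat} -> {ffun E -> nat}.

Local Notation vec := {ffun E -> nat}.

Definition inc (v : W + F) (e : E) : bool :=
  match v with inl w => ew e == w | inr f => ef e == f end.

Definition inB (v : W + F) (z : vec) : Prop :=
  forall e, z e <= b e /\ (~~ inc v e -> z e = 0).

Definition vle (z z' : vec) : Prop := forall e, z e <= z' e.
Definition vmin (z z' : vec) : vec := [ffun e => minn (z e) (z' e)].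
Definition vmax (z z' : vec) : vec := [ffun e => maxn (z e) (z' e)].
Definition vnorm (z : vec) : nat := \sum_(e : E) z e.
Definition unitv (a : E) : vec := [ffun e => nat_of_bool (e == a)].
Definition vadd (z z' : vec) : vec := [ffun e => z e + z' e].
Definition vsub (z z' : vec) : vec := [ffun e => z e - z' e].

Definition choice_function (v : W + F) : Prop :=
  [/\ forall z, inB v z -> inB v (C v z) /\ vle (C v z) z,
      forall z z', inB v z -> inB v z' -> vle z' z -> vle (C v z) z' ->
        C v z' = C v z,
      forall z z', inB v z -> inB v z' -> vle z' z ->
        vle (vmin (C v z) z') (C v z')
    & forall z z', inB v z -> inB v z' -> vle z' z ->
        vnorm (C v z') <= vnorm (C v z)].

Definition restr (v : W + F) (x : vec) : vec :=
  [ffun e => if inc v e then x e else 0].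

Definition acceptable (v : W + F) (z : vec) : Prop := inB v z /\ C v z = z.

Definition prec (v : W + F) (z' z : vec) : Prop :=
  [/\ acceptable v z, acceptable v z', z' <> z & C v (vmax z z') = z].
Definition preceq (v : W + F) (z' z : vec) : Prop := z' = z \/ prec v z' z.

Definition gmatching (x : vec) : Prop :=
  (forall e, x e <= b e) /\ forall v, acceptable v (restr v x).

Definition precF (x y : vec) : Prop :=
  x <> y /\ forall f : F, preceq (inr f) (restr (inr f) x) (restr (inr f) y).
Definition preceqF (x y : vec) : Prop := x = y \/ precF x y.

Definition interesting (v : W + F) (e : E) (z : vec) : Prop :=
  inc v e /\
  exists z' : vec, [/\ inB v z', z e < z' e,
                      (forall e', e' <> e -> z' e' = z e') & z e < C v z' e].

Definition blocks (x : vec) (e : E) : Prop :=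
  interesting (inl (ew e)) e (restr (inl (ew e)) x) /\
  interesting (inr (ef e)) e (restr (inr (ef e)) x).

Definition stable (x : vec) : Prop := gmatching x /\ forall e, ~ blocks x e.

Definition Uplus (x : vec) (e : E) : Prop :=
  interesting (inr (ef e)) e (restr (inr (ef e)) x).
Definition Uminus (x : vec) (e : E) : Prop := 0 < x e /\ ~ Uplus x e.

Definition legalF (x : vec) (a c : E) : Prop :=
  [/\ Uplus x a, ef c = ef a, c <> a &
      (* C_f(x_f + 1^a) = x_f + 1^a - 1^c, written without subtraction *)
      vadd (C (inr (ef a)) (vadd (restr (inr (ef a)) x) (unitv a))) (unitv c)
      = vadd (restr (inr (ef a)) x) (unitv a)].

(* x_w + 1^a - 1^c, w = ew c (exact, since x(c) > 0 for c in U^-) *)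
Definition wswap (x : vec) (c a : E) : vec :=
  vsub (vadd (restr (inl (ew c)) x) (unitv a)) (unitv c).

Definition legalW (x : vec) (c a : E) : Prop :=
  [/\ Uminus x c, Uplus x a, ew a = ew c & acceptable (inl (ew c)) (wswap x c a)].

Definition essentialW (x : vec) (c a : E) : Prop :=
  legalW x c a /\
  forall d, Uplus x d -> ew d = ew c -> d <> a ->
    ~ interesting (inl (ew c)) d (wswap x c a).

(* Digraph D: vertex (true, e) is w^e, vertex (false, e) is f^e. *)
Definition Dvert (x : vec) (u : bool * E) : Prop := Uplus x u.2 \/ Uminus x u.2.

Definition Darc (x : vec) (u u' : bool * E) : Prop :=
  [/\ Dvert x u, Dvert x u' &
    [\/ [/\ u.1 = true, u'.1 = false, u.2 = u'.2 & Uplus x u.2],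
        [/\ u.1 = false, u'.1 = true, u.2 = u'.2 & Uminus x u.2],
        [/\ u.1 = false, u'.1 = false & legalF x u.2 u'.2]
      | [/\ u.1 = true, u'.1 = true & essentialW x u.2 u'.2]]].

Fixpoint alive (x : vec) (n : nat) (u : bool * E) : Prop :=
  match n with
  | 0 => Dvert x u
  | n'.+1 => alive x n' u /\ exists u', alive x n' u' /\ Darc x u' u
  end.

Definition remaining (x : vec) (u : bool * E) : Prop := forall n, alive x n u.

Definition Rarc (x : vec) (u u' : bool * E) : Prop :=
  [/\ remaining x u, remaining x u' & Darc x u u'].

(* A rotation R in R(x): cyclic sequence s = [(a_1,c_1); ...; (a_k,c_k)],
   k >= 1, of distinct edges a_1,c_1,...,a_k,c_k, such that
   w^{a_i} -> f^{a_i} -> f^{c_i} -> w^{c_i} -> w^{a_{i+1}} (indices mod k)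
   is a directed cycle of the remaining digraph. *)
Definition rotation (x : vec) (s : seq (E * E)) : Prop :=
  [/\ 0 < size s, uniq (map fst s ++ map snd s) &
      forall a c a' c', ((a, c), (a', c')) \in zip s (rot 1 s) ->
        [/\ Rarc x (true, a) (false, a), Rarc x (false, a) (false, c),
            Rarc x (false, c) (true, c) & Rarc x (true, c) (true, a')]].

(* x + chi^R (the c_i lie in U^-, so x(c_i) > 0 and no truncation occurs) *)
Definition apply_rotation (s : seq (E * E)) (x : vec) : vec :=
  [ffun e => if e \in map fst s then x e + 1
             else if e \in map snd s then x e - 1 else x e].

End GMatch.

(* Main.v *)
Require Import Defs.
From mathcomp Require Import all_boot.
From Stdlib Require Import Classical ClassicalEpsilon.
From mathcomp Require Import zify.
Set Implicit Arguments. Unset Strict Implicit. Unset Printing Implicit Defensive.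

Section Vec.
Variable E : finType.
Local Notation vec := {ffun E -> nat}.

Lemma vnorm_le (z z' : vec) : (forall e, z e <= z' e) -> vnorm z <= vnorm z'.
Proof. move=> H; rewrite /vnorm; apply: leq_sum => e _; exact: H. Qed.

Lemma sum_le_eq (I : finType) (a c : I -> nat) :
  (forall i, a i <= c i) -> \sum_i c i <= \sum_i a i -> forall i, a i = c i.
Proof.
move=> H Hs i; apply/eqP; rewrite eqn_leq H /=; apply/negPn/negP; rewrite -ltnNge => Hlt.
have : \sum_j a j < \sum_j c j.
  rewrite (bigD1 i) //= [X in _ < X](bigD1 i) //=.
  rewrite -addSn; apply: leq_add => //; apply: leq_sum => j _; exact: H.
by rewrite ltnNge Hs.
Qed.

Lemma le_norm_eq (z z' : vec) :
  (forall e, z e <= z' e) -> vnorm z' <= vnorm z -> z = z'.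
Proof.
move=> H Hn; apply/ffunP => e; exact: (sum_le_eq H Hn).
Qed.

Lemma vnorm_add (z z' : vec) : vnorm (vadd z z') = vnorm z + vnorm z'.
Proof. rewrite /vnorm /vadd -big_split /=; apply: eq_bigr => e _; by rewrite ffunE. Qed.

Lemma vnorm_unit (a : E) : vnorm (unitv a) = 1.
Proof.
rewrite /vnorm (bigD1 a) //= big1 ?ffunE ?eqxx // => e /negbTE ne; by rewrite ffunE ne.
Qed.

Lemma unitvE (a e : E) : unitv a e = (e == a) :> nat.
Proof. by rewrite ffunE. Qed.

Lemma vnorm_addu (z : vec) a : vnorm (vadd z (unitv a)) = (vnorm z).+1.
Proof. by rewrite vnorm_add vnorm_unit addn1. Qed.

Lemma norm_succ (lo z : vec) :
  (forall e, lo e <= z e) -> vnorm z = (vnorm lo).+1 ->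
  exists a, z = vadd lo (unitv a).
Proof.
move=> H Hn.
have [a Ha] : exists a, lo a < z a.
  apply: NNPP => Hno.
  have : forall e, z e <= lo e.
    move=> e; rewrite leqNgt; apply/negP => He; apply: Hno; by exists e.
  move/vnorm_le; by rewrite Hn ltnn.
exists a; apply/esym/le_norm_eq.
  move=> e; rewrite !ffunE; case: eqP => [->|_]; rewrite ?addn1 ?addn0 //; exact: H.
by rewrite vnorm_addu Hn.
Qed.

End Vec.


Section Gen.
Variables (W F E : finType) (ew : E -> W) (ef : E -> F) (b : E -> nat).
Variable C : W + F -> {ffun E -> nat} -> {ffun E -> nat}.
Local Notation vec := {ffun E -> nat}.
Local Notation inB := (inB ew ef b).
Local Notation inc := (inc ew ef).
Local Notation interesting := (interesting ew ef b C).
Local Notation acceptable := (acceptable ew ef b C).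

Lemma inB_le v (z z' : vec) : inB v z' -> (forall e, z e <= z' e) -> inB v z.
Proof.
move=> H Hle e; have [H1 H2] := H e; split; first exact: leq_trans (Hle e) H1.
move=> /H2 He; have := Hle e; rewrite He; lia.
Qed.

Lemma inB_max v (z z' : vec) : inB v z -> inB v z' -> inB v (vmax z z').
Proof.
move=> H H' e; have [H1 H2] := H e; have [H1' H2'] := H' e; rewrite ffunE; split.
  by rewrite geq_max H1 H1'.
by move=> Hn; rewrite H2 // H2'.
Qed.

Lemma inB_restr v (x : vec) : (forall e, x e <= b e) -> inB v (restr ew ef v x).
Proof.
move=> H e; rewrite ffunE; case: ifP => _; split => //; by move/negPf.
Qed.

Variable v : W + F.
Hypothesis HCv : choice_function ew ef b C v.

Lemma C0 (z : vec) : inB v z -> inB v (C v z) /\ forall e, C v z e <= z e.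
Proof. by case: HCv => H _ _ _ /H. Qed.
Lemma A1 (z z' : vec) : inB v z -> (forall e, z' e <= z e) -> (forall e, C v z e <= z' e) ->
  C v z' = C v z.
Proof.
case: HCv => _ H _ _ Hz Hle Hle'; apply: H => //; exact: inB_le Hz Hle.
Qed.
Lemma A2 (z z' : vec) : inB v z -> (forall e, z' e <= z e) ->
  forall e, minn (C v z e) (z' e) <= C v z' e.
Proof.
case: HCv => _ _ H _ Hz Hle e; have := H z z' Hz (inB_le Hz Hle) Hle e; by rewrite ffunE.
Qed.
Lemma A3 (z z' : vec) : inB v z -> (forall e, z' e <= z e) -> vnorm (C v z') <= vnorm (C v z).
Proof.
case: HCv => _ _ _ H Hz Hle; apply: H => //; exact: inB_le Hz Hle.
Qed.

Lemma acc_C (z : vec) : acceptable v z -> C v z = z. Proof. by case. Qed.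
Lemma acc_inB (z : vec) : acceptable v z -> inB v z. Proof. by case. Qed.

Lemma int_to (z : vec) e : inB v z -> interesting v e z ->
  inB v (vadd z (unitv e)) /\ z e < C v (vadd z (unitv e)) e.
Proof.
move=> Hz [Hinc [z' [Hz' Hlt Hoth HC']]].
have Hle : forall e', vadd z (unitv e) e' <= z' e'.
  move=> e'; rewrite !ffunE; case: eqP => [->|/Hoth ->]; lia.
split; first exact: inB_le Hz' Hle.
have := A2 Hz' Hle e; rewrite !ffunE eqxx; lia.
Qed.

Lemma to_int (z : vec) e : inc v e -> inB v (vadd z (unitv e)) ->
  z e < C v (vadd z (unitv e)) e -> interesting v e z.
Proof.
move=> Hinc HB Hlt; split => //; exists (vadd z (unitv e)); split => //.
- rewrite !ffunE eqxx; lia.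
- by move=> e' /eqP /negbTE ne; rewrite !ffunE ne addn0.
Qed.

Lemma nonint_C (z : vec) e : acceptable v z -> inB v (vadd z (unitv e)) ->
  ~ interesting v e z -> inc v e -> C v (vadd z (unitv e)) = z.
Proof.
move=> Hacc HB Hni Hinc.
have He : C v (vadd z (unitv e)) e <= z e.
  rewrite leqNgt; apply/negP => H; exact: Hni (to_int Hinc HB H).
have Hle : forall e', C v (vadd z (unitv e)) e' <= z e'.
  move=> e'; case: (e' =P e) => [->//|/eqP ne].
  have [_ H] := C0 HB; have := H e'; by rewrite !ffunE (negbTE ne) addn0.
rewrite -(A1 HB _ Hle) ?(acc_C Hacc) // => e'; rewrite !ffunE; lia.
Qed.

End Gen.


Section Gen2.
Variables (W F E : finType) (ew : E -> W) (ef : E -> F) (b : E -> nat).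
Variable C : W + F -> {ffun E -> nat} -> {ffun E -> nat}.
Local Notation vec := {ffun E -> nat}.
Local Notation inB := (inB ew ef b).
Local Notation inc := (inc ew ef).
Local Notation interesting := (interesting ew ef b C).
Local Notation acceptable := (acceptable ew ef b C).
Variable v : W + F.
Hypothesis HCv : choice_function ew ef b C v.

Lemma add_case (z : vec) a : acceptable v z -> inB v (vadd z (unitv a)) ->
  z a < C v (vadd z (unitv a)) a ->
  C v (vadd z (unitv a)) = vadd z (unitv a) \/
  exists c, c <> a /\ vadd (C v (vadd z (unitv a))) (unitv c) = vadd z (unitv a).
Proof.
move=> Hacc HB Hlt.
have [_ Hle] := C0 HCv HB.
have Hn : vnorm z <= vnorm (C v (vadd z (unitv a))).
  rewrite -{1}(acc_C Hacc); apply: (A3 HCv HB) => e; rewrite !ffunE; lia.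
have Hn2 := vnorm_le Hle; rewrite vnorm_addu in Hn2.
case: (ltngtP (vnorm (C v (vadd z (unitv a)))) (vnorm z).+1) => Hc.
- right; have Heq : vnorm (C v (vadd z (unitv a))) = vnorm z by lia.
  have Hn' : vnorm (vadd z (unitv a)) = (vnorm (C v (vadd z (unitv a)))).+1.
    by rewrite vnorm_addu Heq.
  have [c Hc'] := norm_succ Hle Hn'.
  exists c; split; last by rewrite -Hc'.
  move=> ca; subst c; move/ffunP: Hc' => /(_ a); rewrite !ffunE eqxx; lia.
- lia.
- left; apply: (le_norm_eq Hle); by rewrite vnorm_addu Hc.
Qed.

Lemma legal_notint (z : vec) a c : acceptable v z -> inB v (vadd z (unitv a)) ->
  c <> a -> vadd (C v (vadd z (unitv a))) (unitv c) = vadd z (unitv a) ->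
  ~ interesting v c z.
Proof.
move=> Hacc HBa ca Heq Hint.
have Hz := acc_inB Hacc.
have [HBc Hltc] := int_to HCv Hz Hint.
set R := C v (vadd z (unitv a)) in Heq.
have HR : forall e, R e + (e == c) = z e + (e == a).
  move=> e; have := congr1 (fun f : vec => f e) Heq; by rewrite /= !ffunE.
have ca' : (c == a) = false by apply/eqP.
have ac' : (a == c) = false by apply/eqP; move=> H; apply: ca; rewrite H.
set Zv := vadd (vadd z (unitv a)) (unitv c).
have HZv : inB v Zv.
  apply: (inB_le (inB_max HBa HBc)) => e; rewrite !ffunE.
  case: (e =P a) => [->|_]; first by rewrite ac' /=; lia.
  case: (e =P c) => [->|_] /=; lia.
have Hle1 : forall e, vadd z (unitv a) e <= Zv e by move=> e; rewrite !ffunE; lia.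
have Hle2 : forall e, vadd z (unitv c) e <= Zv e by move=> e; rewrite !ffunE; lia.
have HCZc : C v Zv c <= z c - 1.
  have := A2 HCv HZv Hle1 c; have := HR c; rewrite !ffunE eqxx ca' /= -/R. lia.
have [_ HCZ] := C0 HCv HZv.
have HCZR : forall e, C v Zv e <= R e.
  move=> e; case: (e =P c) => [->|/eqP ne].
    have := HR c; rewrite eqxx ca' /=; lia.
  have := HR e; have := HCZ e; rewrite !ffunE (negbTE ne) /=; lia.
have HnR : vnorm R <= vnorm (C v Zv) by apply: (A3 HCv HZv Hle1).
have EZ := le_norm_eq HCZR HnR.
have Hc2 : C v (vadd z (unitv c)) = vadd z (unitv c).
  apply/ffunP => e; apply/eqP; rewrite eqn_leq.
  have [_ H] := C0 HCv HBc; rewrite H /=.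
  case: (e =P c) => [->|/eqP ne]; first by rewrite !ffunE eqxx addn1.
  have := A2 HCv HZv Hle2 e; rewrite EZ; have := HR e.
  rewrite !ffunE (negbTE ne) /=; lia.
have := A3 HCv HZv Hle2; rewrite EZ Hc2 vnorm_addu.
have := congr1 (@vnorm E) Heq; rewrite !vnorm_addu; lia.
Qed.

End Gen2.


Lemma map_traject (T : Type) (N : T -> T) n d :
  map N (traject N d n) = traject N (N d) n.
Proof. elim: n d => [//|n IH] d; by rewrite !trajectS /= IH. Qed.

Lemma uniq_map_inj (T T' : eqType) (f : T -> T') (s : seq T) :
  uniq (map f s) -> {in s &, injective f}.
Proof.
elim: s => [//|h t IH] /= /andP [Hn Hu] u v.
rewrite !in_cons => /orP [/eqP->|Hu'] /orP [/eqP->|Hv'] // Hf.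
- by move: Hn; rewrite Hf map_f.
- by move: Hn; rewrite -Hf map_f.
- exact: IH.
Qed.

Lemma zip_map_same (T A B : Type) (g : T -> A) (h : T -> B) (s : seq T) :
  zip (map g s) (map h s) = map (fun c => (g c, h c)) s.
Proof. by elim: s => //= c s ->. Qed.

Lemma cycle_exists (T : finType) (N : T -> T) (G : T -> Prop) c0 :
  G c0 -> (forall c, G c -> G (N c)) ->
  exists cs : seq T, [/\ 0 < size cs, uniq cs, rot 1 cs = map N cs &
                         forall c, c \in cs -> G c].
Proof.
move=> G0 GN.
have Git : forall n, G (iter n N c0) by elim=> //= n IH; exact: GN.
set n := #|T|.
have [i [j [Hij Hjn Heq]]] : exists i j, [/\ i < j, j <= n & iter i N c0 = iter j N c0].
  apply: NNPP => Hno.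
  pose h (k : 'I_n.+1) := iter k N c0.
  have hinj : injective h.
    move=> k1 k2 Hk; apply/val_inj; apply: NNPP => Hne.
    case: (ltngtP k1 k2) => Hl.
    - apply: Hno; exists k1, k2; split => //; rewrite -ltnS; exact: ltn_ord.
    - apply: Hno; exists k2, k1; split => //; rewrite -ltnS; exact: ltn_ord.
    - by apply: Hne.
  by have := @leq_card _ _ h hinj; rewrite card_ord /n ltnn.
set d := iter n N c0.
have Hper : exists p, (0 < p) && (iter p N d == d).
  exists (j - i); rewrite subn_gt0 Hij /=; apply/eqP.
  rewrite /d -iterD.
  have -> : j - i + n = (n - i) + j by lia.
  by rewrite iterD -Heq -iterD subnK //; lia.
case: (ex_minnP Hper) => p /andP [p0 /eqP Hp] Hmin.
have Gd : forall k, G (iter k N d) by move=> k; rewrite /d -iterD.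
exists (traject N d p); split.
- by rewrite size_traject.
- apply/negPn/negP => /(uniqPn d) [k1 [k2 [Hk12 Hk2 Hnth]]].
  rewrite size_traject in Hk2.
  rewrite !nth_traject // in Hnth; last exact: ltn_trans Hk12 Hk2.
  have : iter (k1 + (p - k2)) N d = d.
    by rewrite addnC iterD Hnth -iterD subnK ?Hp //; exact: ltnW.
  move/eqP => H; have := Hmin (k1 + (p - k2)).
  rewrite H andbT; have -> : 0 < k1 + (p - k2) by lia.
  move=> /(_ isT); lia.
- case: p p0 Hp Hmin => [//|p] _ Hp _.
  by rewrite map_traject [traject N d _]trajectS rot1_cons trajectSr -iterSr Hp.
- move=> c /trajectP [k _ ->]; exact: Gd.
Qed.
Lemma hcount (T : finType) (s : seq T) (P : pred T) : uniq s ->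
  \sum_(e : T) (((e \in s) && P e) : nat) = count P s.
Proof.
move=> Hu; have -> : count P s = \sum_(j <- s) (if P j then 1 else 0).
  by rewrite -sum1_count big_mkcond.
rewrite (big_uniq _ Hu) /= [RHS]big_mkcond /=.
by apply: eq_bigr => e _; case: (e \in s); case: (P e).
Qed.


Lemma sum_restr (W F E : finType) (ew : E -> W) (ef : E -> F) (z : {ffun E -> nat}) :
  \sum_w vnorm (restr ew ef (inl w) z) = vnorm z /\
  \sum_g vnorm (restr ew ef (inr g) z) = vnorm z.
Proof.
split; rewrite /vnorm exchange_big /=; apply: eq_bigr => e _.
  rewrite (bigD1 (ew e)) //= ffunE /= eqxx big1 ?addn0 // => w /negbTE ne.
  by rewrite ffunE /= eq_sym ne.
rewrite (bigD1 (ef e)) //= ffunE /= eqxx big1 ?addn0 // => w /negbTE ne.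
by rewrite ffunE /= eq_sym ne.
Qed.

Section Main.
Variables (W F E : finType) (ew : E -> W) (ef : E -> F) (b : E -> nat).
Variable C : W + F -> {ffun E -> nat} -> {ffun E -> nat}.
Local Notation vec := {ffun E -> nat}.
Local Notation inB := (inB ew ef b).
Local Notation inc := (inc ew ef).
Local Notation interesting := (interesting ew ef b C).
Local Notation acceptable := (acceptable ew ef b C).
Local Notation restr := (restr ew ef).
Local Notation Uplus := (Uplus ew ef b C).
Local Notation Uminus := (Uminus ew ef b C).
Hypothesis HC : forall v, choice_function ew ef b C v.
Variables x y : vec.
Hypothesis Hx : stable ew ef b C x.
Hypothesis Hy : stable ew ef b C y.
Hypothesis Hxy : precF ew ef b C x y.

Lemma restrE v (z : vec) e : restr v z e = if inc v e then z e else 0.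
Proof. by rewrite ffunE. Qed.
Lemma incL w e : inc (inl w) e = (ew e == w). Proof. by []. Qed.
Lemma incR g e : inc (inr g) e = (ef e == g). Proof. by []. Qed.

Lemma xb e : x e <= b e. Proof. by case: Hx => [[H _] _]. Qed.
Lemma yb e : y e <= b e. Proof. by case: Hy => [[H _] _]. Qed.
Lemma xacc v : acceptable v (restr v x). Proof. by case: Hx => [[_ H] _]. Qed.
Lemma yacc v : acceptable v (restr v y). Proof. by case: Hy => [[_ H] _]. Qed.
Lemma xB v : inB v (restr v x). Proof. exact: acc_inB (xacc v). Qed.
Lemma yB v : inB v (restr v y). Proof. exact: acc_inB (yacc v). Qed.

Lemma x_noblock e : Uplus x e -> ~ interesting (inl (ew e)) e (restr (inl (ew e)) x).
Proof. case: Hx => _ H Hu Hi; apply: (H e); by split. Qed.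
Lemma y_noblock e : interesting (inl (ew e)) e (restr (inl (ew e)) y) ->
  ~ interesting (inr (ef e)) e (restr (inr (ef e)) y).
Proof. case: Hy => _ H Hu Hi; apply: (H e); by split. Qed.

Lemma F0 g : C (inr g) (vmax (restr (inr g) y) (restr (inr g) x)) = restr (inr g) y.
Proof.
case: Hxy => _ /(_ g) [<-|[_ _ _ //]].
have -> : vmax (restr (inr g) x) (restr (inr g) x) = restr (inr g) x.
  by apply/ffunP => e; rewrite ffunE maxnn.
exact: acc_C (xacc _).
Qed.

Lemma F1 e : x e < y e -> Uplus x e.
Proof.
move=> Hlt; rewrite /Defs.Uplus; set g := ef e.
have Hinc : inc (inr g) e by rewrite incR.
have HB := inB_max (yB (inr g)) (xB (inr g)).
have Hle : forall e', vadd (restr (inr g) x) (unitv e) e' <=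
                      vmax (restr (inr g) y) (restr (inr g) x) e'.
  move=> e'; rewrite !ffunE /=; case: (e' =P e) => [->|_]; rewrite ?eqxx /=; lia.
apply: (to_int Hinc (inB_le HB Hle)).
have := A2 (HC _) HB Hle e; rewrite F0 !ffunE Hinc eqxx; lia.
Qed.

Lemma F2 w : C (inl w) (vmax (restr (inl w) x) (restr (inl w) y)) = restr (inl w) x.
Proof.
have HB := inB_max (xB (inl w)) (yB (inl w)).
have [_ HC0] := C0 (HC (inl w)) HB.
rewrite -{2}(acc_C (xacc (inl w))); apply/esym; apply: (A1 (HC _) HB).
  by move=> e; rewrite !ffunE leq_max leqnn.
move=> e; case: (ltnP (x e) (y e)) => Hlt; last first.
  have := HC0 e; rewrite !ffunE; case: ifP => _; lia.
case Hi: (inc (inl w) e); last first.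
  have := HC0 e; rewrite !ffunE Hi; lia.
have Hle : forall e', vadd (restr (inl w) x) (unitv e) e' <=
                      vmax (restr (inl w) x) (restr (inl w) y) e'.
  move=> e'; rewrite !ffunE; case: (e' =P e) => [->|_]; rewrite ?Hi /=; lia.
have Hw : ew e = w by apply/eqP.
have Hni := x_noblock (F1 Hlt); rewrite Hw in Hni.
have HCe := nonint_C (HC _) (xacc (inl w)) (inB_le HB Hle) Hni Hi.
have := A2 (HC _) HB Hle e; rewrite HCe !ffunE Hi eqxx; lia.
Qed.

Lemma sizes : (forall w, vnorm (restr (inl w) x) = vnorm (restr (inl w) y)) /\
              (forall g, vnorm (restr (inr g) x) = vnorm (restr (inr g) y)).
Proof.
have Hw : forall w, vnorm (restr (inl w) y) <= vnorm (restr (inl w) x).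
  move=> w; rewrite -(F2 w) -{1}(acc_C (yacc (inl w))).
  apply: (A3 (HC _) (inB_max (xB _) (yB _))) => e; rewrite !ffunE; lia.
have Hg : forall g, vnorm (restr (inr g) x) <= vnorm (restr (inr g) y).
  move=> g; rewrite -(F0 g) -{1}(acc_C (xacc (inr g))).
  apply: (A3 (HC _) (inB_max (yB _) (xB _))) => e; rewrite !ffunE; lia.
have [Sx1 Sx2] := sum_restr ew ef x.
have [Sy1 Sy2] := sum_restr ew ef y.
have Hs1 : \sum_w vnorm (restr (inl w) x) <= \sum_w vnorm (restr (inl w) y).
  rewrite Sx1 Sy1 -Sx2 -Sy2; apply: leq_sum => g _; exact: Hg.
have Hs2 : \sum_g vnorm (restr (inr g) y) <= \sum_g vnorm (restr (inr g) x).
  rewrite Sx2 Sy2 -Sx1 -Sy1; apply: leq_sum => w _; exact: Hw.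
split; first by move=> w; apply/esym; apply: (sum_le_eq Hw Hs1).
by move=> g; apply: (sum_le_eq Hg Hs2).
Qed.


Definition pb (P : Prop) : bool := if excluded_middle_informative P then true else false.
Lemma pbP (P : Prop) : pb P = true <-> P.
Proof. rewrite /pb; case: excluded_middle_informative => //. Qed.

Lemma Uplus_b e : Uplus x e -> x e < b e.
Proof.
move=> H; have [HB _] := int_to (HC _) (xB _) H.
have [H1 _] := HB e; move: H1; rewrite !ffunE /= !eqxx; lia.
Qed.

Lemma WS c : Uminus x c -> y c < x c ->
  exists a, essentialW ew ef b C x c a /\
    (y a <= x a -> interesting (inl (ew a)) a (restr (inl (ew a)) y)).
Proof.
move=> Hum Hyc; have [Hxc0 HnUc] := Hum.
set w := ew c.
have [X HXd] : {X : vec | X = restr (inl w) x} by exists (restr (inl w) x).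
have [Yw HYd] : {X : vec | X = restr (inl w) y} by exists (restr (inl w) y).
have HXE : forall e, X e = if inc (inl w) e then x e else 0 by move=> e; rewrite HXd restrE.
have HYE : forall e, Yw e = if inc (inl w) e then y e else 0 by move=> e; rewrite HYd restrE.
have HXa : acceptable (inl w) X by rewrite HXd; exact: xacc.
have HYa : acceptable (inl w) Yw by rewrite HYd; exact: yacc.
have Hcinc : inc (inl w) c by rewrite incL.
have HXc : X c = x c by rewrite HXE Hcinc.
have HYc : Yw c = y c by rewrite HYE Hcinc.
pose kb d : bool := inc (inl w) d && pb (Uplus x d).
have kbc : kb c = false.
  rewrite /kb Hcinc /=; case E1: (pb _) => //; by move/pbP: E1.
have HX0 : forall e, ~~ inc (inl w) e -> X e = 0 by move=> e /negbTE H; rewrite HXE H.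
have HY0 : forall e, ~~ inc (inl w) e -> Yw e = 0 by move=> e /negbTE H; rewrite HYE H.
have Hkb0 : forall e, ~~ inc (inl w) e -> kb e = false by move=> e /negbTE H; rewrite /kb H.
have HkbP : forall e, kb e -> inc (inl w) e /\ Uplus x e.
  by move=> e /andP [H1 /pbP H2].
have HXYu : forall e, X e < Yw e -> kb e.
  move=> e; case Hi: (inc (inl w) e); last by rewrite HXE HYE Hi.
  rewrite HXE HYE Hi => /F1 HU; rewrite /kb Hi /=; by apply/pbP.
pose T : vec := [ffun e => maxn (maxn (X e) (Yw e)) (X e + kb e)].
pose Y : vec := [ffun e => T e - (e == c)].
pose V : vec := [ffun e => maxn (X e) (Yw e) - (e == c)].
have HTB : inB (inl w) T.
  move=> e; rewrite ffunE; case Hi: (inc (inl w) e); last first.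
    by rewrite HX0 ?Hi // HY0 ?Hi // Hkb0 ?Hi.
  split => //; rewrite HXE HYE Hi; have := xb e; have := yb e.
  case Hk: (kb e) => /=; last by lia.
  have := Uplus_b (HkbP e Hk).2; lia.
have HTX : C (inl w) T = X.
  rewrite -{1}(acc_C HXa); apply/esym; apply: (A1 (HC (inl w)) HTB).
    by move=> e; rewrite ffunE; lia.
  move=> e; have [_ HC0] := C0 (HC (inl w)) HTB.
  case Hk: (kb e); last first.
    have := HC0 e; rewrite ffunE Hk; case: (ltnP (X e) (Yw e)) => Hl.
      by rewrite (HXYu _ Hl) in Hk.
    lia.
  have [Hi HU] := HkbP e Hk.
  have Hle : forall e', vadd X (unitv e) e' <= T e'.
    by move=> e'; rewrite !ffunE; case: (e' =P e) => [->|_]; rewrite ?Hk /=; lia.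
  have Hw : ew e = w by apply/eqP.
  have Hni := x_noblock HU; rewrite Hw -HXd in Hni.
  have HCe := nonint_C (HC (inl w)) HXa (inB_le HTB Hle) Hni Hi.
  have := A2 (HC (inl w)) HTB Hle e; rewrite HCe !ffunE eqxx; lia.
have HYT : forall e, Y e <= T e by move=> e; rewrite ffunE; lia.
have HYB : inB (inl w) Y := inB_le HTB HYT.
have HCYlo : forall e, X e - (e == c) <= C (inl w) Y e.
  move=> e; have := A2 (HC (inl w)) HTB HYT e; rewrite HTX !ffunE; lia.
have HVY : forall e, V e <= Y e by move=> e; rewrite !ffunE; lia.
have HYwV : forall e, Yw e <= V e.
  move=> e; rewrite ffunE; case: (e =P c) => [->|_] /=; last by lia.
  rewrite HXc HYc; lia.
have Hn1 : vnorm (C (inl w) Y) <= vnorm X.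
  rewrite -{1}HTX. exact: (A3 (HC (inl w)) HTB HYT).
have Hn2 : vnorm X <= vnorm (C (inl w) Y).
  have -> : vnorm X = vnorm Yw by rewrite HXd HYd; exact: ((sizes).1 w).
  rewrite -{1}(acc_C HYa).
  apply: leq_trans (A3 (HC (inl w)) HYB HVY).
  have HVB : inB (inl w) V := inB_le HYB HVY. exact: (A3 (HC (inl w)) HVB HYwV).
pose lo : vec := [ffun e => X e - (e == c)].
have Hlo : vadd lo (unitv c) = X.
  apply/ffunP => e; rewrite !ffunE; case: (e =P c) => [->|_] /=; lia.
have Hlole : forall e, lo e <= C (inl w) Y e by move=> e; rewrite ffunE; exact: HCYlo.
have Hnorm : vnorm (C (inl w) Y) = (vnorm lo).+1.
  have := congr1 (@vnorm E) Hlo; rewrite vnorm_addu; lia.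
have [a Ha] := norm_succ Hlole Hnorm.
have [_ HCYle] := C0 (HC (inl w)) HYB.
have HCYa : C (inl w) Y a = X a - (a == c) + 1 by rewrite Ha !ffunE eqxx.
have ac : a <> c.
  move=> E1; subst a; have := HCYle c; rewrite HCYa !ffunE eqxx kbc; lia.
have ac' : (a == c) = false by apply/eqP.
have Hka : kb a.
  case Hk: (kb a) => //; have := HCYle a; rewrite HCYa !ffunE ac' Hk.
  case: (ltnP (X a) (Yw a)) => Hl; first by rewrite (HXYu _ Hl) in Hk.
  lia.
have [Hia HUa] := HkbP a Hka.
have Hwa : ew a = w by apply/eqP.
have Hsw : wswap ew ef x c a = C (inl w) Y.
  apply/ffunP => e; rewrite Ha /wswap -/w -HXd !ffunE.
  case: (e =P c) => [->|_]; last by rewrite /= !subn0.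
  have ca' : (c == a) = false by rewrite eq_sym.
  rewrite ca' HXc /=; lia.
have Hacc : acceptable (inl w) (C (inl w) Y).
  split; first by have [] := C0 (HC (inl w)) HYB.
  apply: (A1 (HC (inl w)) HYB HCYle) => e; exact: leqnn.
exists a; split.
  split.
    split => //.
    by rewrite Hsw.
  move=> d HUd Hwd da Hint; rewrite Hsw in Hint.
  have [HBd Hltd] := int_to (HC (inl w)) (acc_inB Hacc) Hint.
  have dc : d <> c by move=> E1; subst d.
  have Hkd : kb d by rewrite /kb incL Hwd eqxx /=; apply/pbP.
  have Hle : forall e, vadd (C (inl w) Y) (unitv d) e <= Y e.
    move=> e; rewrite [vadd _ _ e]ffunE [unitv d e]ffunE; case: (e =P d) => [->|_]; last first.
      rewrite addn0; exact: HCYle.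
    rewrite Ha !ffunE Hkd; move/eqP/negbTE: da => da'; rewrite eq_sym da'.
    move/eqP/negbTE: dc => dc'; rewrite eq_sym dc' /= !subn0; lia.
  have Hge : forall e, C (inl w) Y e <= vadd (C (inl w) Y) (unitv d) e.
    by move=> e; rewrite ffunE; lia.
  have E1 := A1 (HC (inl w)) HYB Hle Hge.
  by rewrite E1 ltnn in Hltd.
move=> Hya; rewrite Hwa -HYd.
have Hle : forall e, vadd Yw (unitv a) e <= Y e.
  move=> e; rewrite [vadd _ _ e]ffunE [unitv a e]ffunE; case: (e =P a) => [->|_]; last first.
    rewrite addn0; exact: leq_trans (HYwV e) (HVY e).
  have := HCYle a; rewrite HCYa HXE HYE Hia /= ac'; lia.
apply: (to_int Hia (inB_le HYB Hle)).
have := A2 (HC (inl w)) HYB Hle a; rewrite HCYa [vadd _ _ a]ffunE [unitv a a]ffunE eqxx ac' HXE HYE Hia; lia.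
Qed.

Lemma FS a : Uplus x a ->
  (x a < y a \/ interesting (inl (ew a)) a (restr (inl (ew a)) y)) ->
  exists c, legalF ew ef b C x a c /\ y c < x c /\ Uminus x c.
Proof.
move=> HUa Hor; set g := ef a.
have [X HXd] : {X : vec | X = restr (inr g) x} by exists (restr (inr g) x).
have [Yg HYd] : {X : vec | X = restr (inr g) y} by exists (restr (inr g) y).
have HXE : forall e, X e = if inc (inr g) e then x e else 0 by move=> e; rewrite HXd restrE.
have HYE : forall e, Yg e = if inc (inr g) e then y e else 0 by move=> e; rewrite HYd restrE.
have HXa : acceptable (inr g) X by rewrite HXd; exact: xacc.
have HYa : acceptable (inr g) Yg by rewrite HYd; exact: yacc.
have HXB := acc_inB HXa; have HYB := acc_inB HYa.
have Hainc : inc (inr g) a by rewrite incR.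
have HUa' : interesting (inr g) a X by rewrite HXd.
have [HBa Hlta] := int_to (HC (inr g)) HXB HUa'.
have HF0 : C (inr g) (vmax Yg X) = Yg by rewrite HXd HYd; exact: F0.
pose S := vmax (vmax Yg X) (vadd X (unitv a)).
have HSB : inB (inr g) S := inB_max (inB_max HYB HXB) HBa.
have HSle1 : forall e, vadd X (unitv a) e <= S e by move=> e; rewrite [S e]ffunE; lia.
have HSle2 : forall e, vmax Yg X e <= S e by move=> e; rewrite [S e]ffunE; lia.
have HCS : C (inr g) S = Yg.
  case: (ltnP (x a) (y a)) => Hya.
    have -> : S = vmax Yg X; last exact: HF0.
    apply/ffunP => e; rewrite !ffunE; case: (e =P a) => [->|_]; last by rewrite /=; lia.
    rewrite HXE HYE Hainc /=; lia.
  have Hint : interesting (inl (ew a)) a (restr (inl (ew a)) y).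
    by case: Hor => // H; move: Hya; rewrite leqNgt H.
  have [_ HC0] := C0 (HC (inr g)) HSB.
  case: (leqP (C (inr g) S a) (X a)) => HCa.
    transitivity (C (inr g) (vmax Yg X)); last exact: HF0.
    apply/esym; apply: (A1 (HC (inr g)) HSB HSle2) => e.
    case: (e =P a) => [->|/eqP ne]; first by rewrite ffunE; lia.
    have := HC0 e; rewrite !ffunE (negbTE ne) addn0; lia.
  exfalso; apply: (y_noblock Hint); rewrite -/g -HYd.
  have Hle : forall e, vadd Yg (unitv a) e <= S e.
    move=> e; rewrite [vadd _ _ e]ffunE [unitv a e]ffunE; case: (e =P a) => [->|_]; last first.
      rewrite addn0 [S e]ffunE [vmax Yg X e]ffunE; lia.
    rewrite [S a]ffunE [vmax Yg X a]ffunE [vadd _ _ a]ffunE [unitv a a]ffunE eqxx HYE HXE Hainc /=; lia.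
  apply: (to_int Hainc (inB_le HSB Hle)).
  have := A2 (HC (inr g)) HSB Hle a.
  rewrite [vadd _ _ a]ffunE [unitv a a]ffunE eqxx HYE HXE Hainc in HCa *; lia.
have Hsz : vnorm X = vnorm Yg by rewrite HXd HYd; exact: ((sizes).2 g).
case: (add_case (HC (inr g)) HXa HBa Hlta) => [Hi|[c [ca Heq]]].
  have := A3 (HC (inr g)) HSB HSle1; rewrite Hi HCS vnorm_addu Hsz; lia.
have Hec : forall e, C (inr g) (vadd X (unitv a)) e + (e == c) = X e + (e == a).
  by move=> e; have := congr1 (fun f : vec => f e) Heq; rewrite /= !ffunE.
have ca' : (c == a) = false by apply/eqP.
have Hcx := Hec c; rewrite eqxx ca' /= in Hcx.
have Hcinc : inc (inr g) c.
  case Hi: (inc (inr g) c) => //; move: Hcx; rewrite HXE Hi; lia.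
have Hefc : ef c = ef a by apply/eqP.
have HXc : X c = x c by rewrite HXE Hcinc.
have Hyc : y c < x c.
  rewrite ltnNge; apply/negP => Hyc.
  have := A2 (HC (inr g)) HSB HSle1 c; rewrite HCS HYE Hcinc.
  rewrite [vadd _ _ c]ffunE [unitv a c]ffunE ca' HXc /=; lia.
exists c; split; last split => //.
  split => //; by rewrite -/g -HXd.
split; first by lia.
rewrite /Defs.Uplus Hefc -/g -HXd; exact: (legal_notint (HC (inr g)) HXa HBa ca Heq).
Qed.

Definition Good c := Uminus x c /\ y c < x c.

Definition Pstep c (p : E * E) :=
  [/\ essentialW ew ef b C x c p.1,
      (y p.1 <= x p.1 -> interesting (inl (ew p.1)) p.1 (restr (inl (ew p.1)) y)),
      legalF ew ef b C x p.1 p.2 & Good p.2].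

Lemma step c : Good c -> exists p, Pstep c p.
Proof.
case=> Hum Hyc; have [a [Hess Hint]] := WS Hum Hyc.
have HUa : Uplus x a by case: Hess => [[]].
have Hor : x a < y a \/ interesting (inl (ew a)) a (restr (inl (ew a)) y).
  case: (leqP (y a) (x a)) => H; [right; exact: Hint H | by left].
have [c' [Hl [Hy' Hm']]] := FS HUa Hor.
by exists (a, c').
Qed.

Lemma start : exists c, Good c.
Proof.
have [a0 Ha0] : exists a, x a < y a.
  apply: NNPP => Hno; case: Hxy => Hne _; apply: Hne.
  apply/ffunP => e.
  have Hle : forall e, y e <= x e.
    move=> e'; rewrite leqNgt; apply/negP => H; apply: Hno; by exists e'.
  have := F0 (ef e).
  have -> : vmax (restr (inr (ef e)) y) (restr (inr (ef e)) x) = restr (inr (ef e)) x.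
    apply/ffunP => e'; rewrite !ffunE; case: ifP => _ //; have := Hle e'; lia.
  rewrite (acc_C (xacc _)) => /(congr1 (fun f : vec => f e)).
  by rewrite !ffunE /= eqxx.
have [c [_ [Hyc Hm]]] := FS (F1 Ha0) (or_introl Ha0).
by exists c.
Qed.

Lemma legal_unique a c1 c2 : legalF ew ef b C x a c1 -> legalF ew ef b C x a c2 -> c1 = c2.
Proof.
case=> _ _ _ H1 [_ _ _ H2]; have := congr1 (fun f : vec => f c1) (etrans H1 (esym H2)).
rewrite /= !ffunE eqxx; case: (c1 =P c2) => // _ /=; lia.
Qed.

Lemma main_thm : exists s : seq (E * E),
    rotation ew ef b C x s /\ preceqF ew ef b C (apply_rotation s x) y.
Proof.
have [f Hf] : exists f : E -> E * E, forall c, Good c -> Pstep c (f c).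
  apply: (choice (fun c p => Good c -> Pstep c p)) => c.
  case: (classic (Good c)) => [H|H].
    have [p Hp] := step H; by exists p.
  by exists (c, c).
pose Aof c := (f c).1; pose N c := (f c).2.
have GN : forall c, Good c -> Good (N c) by move=> c /Hf [].
have [c0 G0] := start.
have [cs [Hsz Hu Hrot HG]] := cycle_exists G0 GN.
have HP : forall c, c \in cs -> Pstep c (Aof c, N c).
  by move=> c /HG /Hf; rewrite /Aof /N -surjective_pairing.
have HUA : forall c, c \in cs -> Uplus x (Aof c) by move=> c /HP [[[]]].
have HNcs : forall c, c \in cs -> N c \in cs.
  by move=> c Hc; rewrite -(mem_rot 1) Hrot map_f.
have Hpred : forall c, c \in cs -> exists2 c', c' \in cs & c = N c'.
  by move=> c; rewrite -(mem_rot 1) Hrot => /mapP.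
have HuN : uniq (map N cs) by rewrite -Hrot rot_uniq.
have HNinj := uniq_map_inj HuN.
have HuA : uniq (map Aof cs).
  rewrite map_inj_in_uniq // => c1 c2 H1 H2 HA; apply: HNinj => //.
  have [_ _ L1 _] := HP c1 H1; have [_ _ L2 _] := HP c2 H2.
  rewrite /= HA in L1; exact: legal_unique L1 L2.
set As := map Aof cs; set Ns := map N cs.
have HAU : forall e, e \in As -> Uplus x e by move=> e /mapP [c Hc ->]; exact: HUA.
have HNU : forall e, e \in Ns -> Uminus x e.
  by move=> e /mapP [c Hc ->]; have [[]] := HG _ (HNcs _ Hc).
have HAN : forall e, e \in As -> e \in Ns -> False.
  by move=> e /HAU H /HNU [_ H'].
pose s := map (fun c => (Aof c, N c)) cs.
have Hfst : map fst s = As by rewrite /s -map_comp.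
have Hsnd : map snd s = Ns by rewrite /s -map_comp.
pose Sv (u : bool * E) := exists2 c, c \in cs &
  [\/ u = (true, Aof c), u = (false, Aof c), u = (false, N c) | u = (true, N c)].
have Darc1 : forall c, c \in cs -> Darc ew ef b C x (true, Aof c) (false, Aof c).
  move=> c Hc; split; try (left; exact: HUA); by apply: Or41; split => //; exact: HUA.
have Darc2 : forall c, c \in cs -> Darc ew ef b C x (false, Aof c) (false, N c).
  move=> c Hc; have [_ _ L _] := HP c Hc; split; first (left; exact: HUA).
    by right; have [] := HG _ (HNcs _ Hc).
  by apply: Or43.
have Darc3 : forall c, c \in cs -> Darc ew ef b C x (false, N c) (true, N c).
  move=> c Hc; have [HmN _] := HG _ (HNcs _ Hc).
  split; try (right; exact: HmN); by apply: Or42.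
have Darc4 : forall c, c \in cs -> Darc ew ef b C x (true, c) (true, Aof c).
  move=> c Hc; have [Hess _ _ _] := HP c Hc.
  split; first (right; by have [] := HG _ Hc).
    left; exact: HUA.
  by apply: Or44.
have Hin : forall u, Sv u -> exists2 u', Sv u' & Darc ew ef b C x u' u.
  move=> u [c Hc [->|->|->|->]].
  - have [c' Hc' Ec] := Hpred c Hc.
    exists (true, c); last exact: Darc4.
    exists c'; first done. rewrite Ec; by apply: Or44.
  - exists (true, Aof c); [exists c; [done | by apply: Or41] | exact: Darc1].
  - exists (false, Aof c); [exists c; [done | by apply: Or42] | exact: Darc2].
  - exists (false, N c); [exists c; [done | by apply: Or43] | exact: Darc3].
have Hrem : forall u, Sv u -> remaining ew ef b C x u.
  move=> u Hu' n; elim: n u Hu' => [|n IH] u Hu' /=.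
    by have [u' _ [_ H _]] := Hin u Hu'.
  split; first exact: IH.
  have [u' Hu'' Ha] := Hin u Hu'; exists u'; split => //; exact: IH.
exists s; split.
  split.
  - by rewrite size_map.
  - rewrite Hfst Hsnd cat_uniq HuA HuN /= andbT.
    by apply/hasPn => e He; apply/negP => He'; apply: (HAN e He' He).
  - move=> a c a' c'.
    rewrite /s -map_rot Hrot -map_comp zip_map_same => /mapP [c1 Hc1 [-> -> -> _]].
    have Hc2 := HNcs _ Hc1.
    split; split.
    all: try (apply: Hrem; exists c1; [done | by [apply: Or41|apply: Or42|apply: Or43|apply: Or44]]).
    + exact: Darc1.
    + exact: Darc2.
    + exact: Darc3.
    + apply: Hrem; exists (N c1); [done | exact: Or41].
    + exact: (Darc4 _ Hc2).
have [x' Hx'd] : {x' : vec | x' = apply_rotation s x} by exists (apply_rotation s x).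
rewrite -Hx'd.
have Hx'E : forall e, x' e = if e \in As then x e + 1 else if e \in Ns then x e - 1 else x e.
  by move=> e; rewrite Hx'd ffunE Hfst Hsnd.
have HNleg : forall e, e \in Ns -> exists2 a, a \in As & legalF ew ef b C x a e.
  move=> e /mapP [c Hc ->]; exists (Aof c); first exact: map_f.
  by have [] := HP c Hc.
have HAint : forall e, e \in As -> y e <= x e ->
    interesting (inl (ew e)) e (restr (inl (ew e)) y).
  by move=> e /mapP [c Hc ->]; have [] := HP c Hc.
have Hcnt : forall g, count (inc (inr g)) As = count (inc (inr g)) Ns.
  move=> g; rewrite !count_map; apply: eq_in_count => c Hc /=.
  have [_ _ [_ Hef _ _] _] := HP c Hc; by rewrite /preim /= Hef.
have Hacc' : forall g, acceptable (inr g) (restr (inr g) x').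
  move=> g.
  pose Q : vec := [ffun e => if inc (inr g) e then x e + (e \in As) else 0].
  have HQB : inB (inr g) Q.
    move=> e; rewrite ffunE; case Hi: (inc (inr g) e); split => //.
    case HeA: (e \in As) => /=; first by have := Uplus_b (HAU e HeA); lia.
    rewrite addn0; exact: xb.
  have HXQ : forall e, restr (inr g) x e <= Q e by move=> e; rewrite !ffunE; case: ifP => _; lia.
  have Hx'Q : forall e, restr (inr g) x' e <= Q e.
    move=> e; rewrite !ffunE Hx'E; case: ifP => _ //.
    case: (e \in As) => /=; [lia|]; case: (e \in Ns); lia.
  have [_ HC0] := C0 (HC (inr g)) HQB.
  have HCQ : forall e, C (inr g) Q e <= restr (inr g) x' e.
    move=> e; have := HC0 e; rewrite [Q e]ffunE restrE Hx'E.
    case Hi: (inc (inr g) e) => //.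
    case HeA: (e \in As) => //.
    case HeN: (e \in Ns); last by rewrite addn0.
    move=> _; have [a HaA [HUa Hef Hne Heq]] := HNleg e HeN.
    have Hga : ef a = g by rewrite -Hef; apply/eqP.
    rewrite Hga in Heq.
    have Hea : (e == a) = false by apply/eqP.
    have := congr1 (fun f : vec => f e) Heq; rewrite /= !ffunE eqxx Hea Hi addn0 => Hce.
    have Hle : forall e', vadd (restr (inr g) x) (unitv a) e' <= Q e'.
      move=> e'; rewrite !ffunE; case: (e' =P a) => [->|_]; last by case: ifP => _; lia.
      by rewrite incR Hga eqxx HaA.
    have := A2 (HC (inr g)) HQB Hle e; rewrite !ffunE Hi Hea addn0; lia.
  have Hpt : forall e, restr (inr g) x' e + ((e \in Ns) && inc (inr g) e) =
                       restr (inr g) x e + ((e \in As) && inc (inr g) e).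
    move=> e; rewrite !restrE Hx'E; case: (inc (inr g) e); rewrite ?andbT ?andbF //.
    case HeA: (e \in As).
      have -> : (e \in Ns) = false by apply/negP => HeN; exact: HAN e HeA HeN.
      rewrite /=; lia.
    case HeN: (e \in Ns) => //=; have [H0 _] := HNU e HeN; lia.
  have Hsum : vnorm (restr (inr g) x') + count (inc (inr g)) Ns =
              vnorm (restr (inr g) x) + count (inc (inr g)) As.
    rewrite -(hcount _ HuN) -(hcount _ HuA) /vnorm -!big_split /=.
    by apply: eq_bigr => e _; exact: Hpt.
  have Hn : vnorm (restr (inr g) x') <= vnorm (C (inr g) Q).
    have := A3 (HC (inr g)) HQB HXQ; rewrite (acc_C (xacc _)); have := Hcnt g; lia.
  have EQ := le_norm_eq HCQ Hn.
  split; first by rewrite -EQ; have [] := C0 (HC (inr g)) HQB.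
  by rewrite (A1 (HC (inr g)) HQB Hx'Q HCQ) EQ.
have HF' : forall g, C (inr g) (vmax (restr (inr g) y) (restr (inr g) x')) = restr (inr g) y.
  move=> g.
  set Yg := restr (inr g) y; set Xg := restr (inr g) x; set X'g := restr (inr g) x'.
  pose H' := vmax (vmax Yg Xg) X'g.
  have HB' : inB (inr g) H' := inB_max (inB_max (yB _) (xB _)) (acc_inB (Hacc' g)).
  have [_ HC0] := C0 (HC (inr g)) HB'.
  have HCH' : forall e, C (inr g) H' e <= vmax Yg Xg e.
    move=> e; case: (leqP (X'g e) (vmax Yg Xg e)) => Hle.
      have := HC0 e; rewrite [H' e]ffunE; lia.
    move: Hle; rewrite /X'g /Yg /Xg !ffunE Hx'E.
    case Hi: (inc (inr g) e); last by [].
    case HeA: (e \in As); last by case: (e \in Ns); lia.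
    move=> Hlt; have Hyx : y e <= x e by lia.
    have Hni := y_noblock (HAint e HeA Hyx).
    have Hge : ef e = g by apply/eqP.
    rewrite Hge -/Yg in Hni.
    have HleY : forall e', vadd Yg (unitv e) e' <= H' e'.
      move=> e'; rewrite [vadd _ _ e']ffunE [unitv e e']ffunE [H' e']ffunE.
      case: (e' =P e) => [->|_]; last by rewrite addn0 [vmax Yg Xg e']ffunE; lia.
      rewrite /X'g /Yg !ffunE Hi Hx'E HeA /=; lia.
    have HCY := nonint_C (HC (inr g)) (yacc (inr g)) (inB_le HB' HleY) Hni Hi.
    have := A2 (HC (inr g)) HB' HleY e; rewrite HCY [vadd _ _ e]ffunE [unitv e e]ffunE eqxx.
    rewrite /Yg !ffunE Hi; lia.
  have HCH'eq : C (inr g) H' = Yg.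
    transitivity (C (inr g) (vmax Yg Xg)); last exact: F0.
    apply/esym; apply: (A1 (HC (inr g)) HB') => // e; rewrite [H' e]ffunE; lia.
  transitivity (C (inr g) H'); last exact: HCH'eq.
  apply: (A1 (HC (inr g)) HB').
    move=> e; rewrite [H' e]ffunE !ffunE; lia.
  move=> e; rewrite HCH'eq [vmax Yg X'g e]ffunE; lia.
case: (eqVneq x' y) => [->|Hne]; [by left | right; split; first by apply/eqP].
move=> g; case: (eqVneq (restr (inr g) x') (restr (inr g) y)) => [->|Hng]; [by left|right].
split; [exact: yacc | exact: (Hacc' g) | exact/eqP | exact: (HF' g)].
Qed.

End Main.

Theorem proposition3p5 (W F E : finType) (ew : E -> W) (ef : E -> F)
  (b : E -> nat) (C : W + F -> {ffun E -> nat} -> {ffun E -> nat})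
  (Hsimple : injective (fun e => (ew e, ef e)))
  (HC : forall v, choice_function ew ef b C v)
  (x y : {ffun E -> nat})
  (Hx : stable ew ef b C x) (Hy : stable ew ef b C y)
  (Hxy : precF ew ef b C x y) :
  exists s : seq (E * E),
    rotation ew ef b C x s /\ preceqF ew ef b C (apply_rotation s x) y.
Proof. exact: (main_thm HC Hx Hy Hxy). Qed.
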